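(* Let $K$ be a ramified quadratic extension of $\mathbb{Q}_2$, $d=2m$ with $m$ odd, $m\ge3$, and $f=a_1x_1^d+\dots+a_sx_s^d$ with all $a_i\in\mathcal{O}\setminus\{0\}$. Suppose that for some level $k$, $f$ has two variables at level $k$ with the same $\pi$-coefficient, at least two variables at level $k+1$, and a variable in at least one of the levels $k+2$, $k+3$, $k+4$. Then $f$ has a nontrivial zero in $K$.
   Context: $\mathcal{O}$ is the ring of integers of $K$ and $\pi$ the uniformizer: $\pi=\sqrt{2},\sqrt{-2},\sqrt{10},\sqrt{-10},1+\sqrt{-1},1+\sqrt{-5}$ for $K=\mathbb{Q}_2(\sqrt2),\mathbb{Q}_2(\sqrt{-2}),\mathbb{Q}_2(\sqrt{10}),\mathbb{Q}_2(\sqrt{-10}),\mathbb{Q}_2(\sqrt{-1}),\mathbb{Q}_2(\sqrt{-5})$ respectively. Each unit $u$ has a unique expansion $u=c_0+c_1\pi+c_2\pi^2+\cdots$ with $c_j\in\{0,1\}$, $c_0=1$. Writing $a_i=\pi^r u$ with $u$ a unit, the variable $x_i$ is at level $r\bmod d$ (levels are residues modulo $d$), and its $\pi$-coefficient is $c_1$ of $u$. A nontrivial zero is a point of $K^s$, not all coordinates zero, where $f$ vanishes. *)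

(* Defs.v *)
(* The ring of integers O of a ramified quadratic extension
   K = Q_2(sqrt D) of Q_2 is Z_2[sqrt D] for the six discriminants listed in
   the paper; we realise it as the inverse limit  lim_n Z[sqrt D] / 2^n,
   i.e. as coherent sequences of elements of Z[sqrt D] (pairs (p,q) standing
   for p + q sqrt D), two sequences being equal in O iff they agree modulo
   2^n at every stage n. *)
From Stdlib Require Import ZArith Arith List.
Open Scope Z_scope.

Inductive ramQ2 : Set :=
| Q2sqrt2 | Q2sqrtm2 | Q2sqrt10 | Q2sqrtm10 | Q2sqrtm1 | Q2sqrtm5.

(* K = Q_2(sqrt (disc K)) *)
Definition disc (K : ramQ2) : Z :=
  match K with
  | Q2sqrt2 => 2 | Q2sqrtm2 => -2 | Q2sqrt10 => 10 | Q2sqrtm10 => -10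
  | Q2sqrtm1 => -1 | Q2sqrtm5 => -5
  end.

(* Elements of Z[sqrt D] : (p, q) = p + q sqrt D *)
Definition zq := (Z * Z)%type.
Definition zq_add (x y : zq) : zq := (fst x + fst y, snd x + snd y).
Definition zq_opp (x : zq) : zq := (- fst x, - snd x).
Definition zq_mul (K : ramQ2) (x y : zq) : zq :=
  (fst x * fst y + disc K * snd x * snd y, fst x * snd y + snd x * fst y).
Definition zq_red (n : nat) (x : zq) : zq :=
  (fst x mod 2 ^ Z.of_nat n, snd x mod 2 ^ Z.of_nat n).

Definition piZ (K : ramQ2) : zq :=
  match K with
  | Q2sqrtm1 | Q2sqrtm5 => (1, 1)
  | _ => (0, 1)
  end.

Definition Oseq := nat -> zq.

Definition isO (s : Oseq) : Prop :=
  forall n : nat, zq_red n (s (S n)) = zq_red n (s n).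

Definition Oeq (s t : Oseq) : Prop :=
  forall n : nat, zq_red n (s n) = zq_red n (t n).

Definition Ocst (x : zq) : Oseq := fun _ => x.
Definition Ozero : Oseq := Ocst (0, 0).
Definition Oone : Oseq := Ocst (1, 0).
Definition Opi (K : ramQ2) : Oseq := Ocst (piZ K).
Definition Oadd (s t : Oseq) : Oseq := fun n => zq_add (s n) (t n).
Definition Osub (s t : Oseq) : Oseq := fun n => zq_add (s n) (zq_opp (t n)).
Definition Omul (K : ramQ2) (s t : Oseq) : Oseq := fun n => zq_mul K (s n) (t n).
Fixpoint Opow (K : ramQ2) (s : Oseq) (e : nat) : Oseq :=
  match e with
  | O => Oone
  | S e' => Omul K s (Opow K s e')
  end.

Definition Ounit (K : ramQ2) (u : Oseq) : Prop :=
  exists v, isO v /\ Oeq (Omul K u v) Oone.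

Definition Odvd (K : ramQ2) (a b : Oseq) : Prop :=
  exists c, isO c /\ Oeq (Omul K a c) b.

(* the pi-coefficient c_1 of the unit u = 1 + c_1 pi + c_2 pi^2 + ... is c:
   u - 1 - c pi is divisible by pi^2 *)
Definition pi_coef (K : ramQ2) (u : Oseq) (c : bool) : Prop :=
  Odvd K (Opow K (Opi K) 2)
       (Osub (Osub u Oone) (if c then Opi K else Ozero)).

Definition level_coef (K : ramQ2) (d : nat) (a : Oseq) (l : nat) (c : bool)
  : Prop :=
  exists (r : nat) (u : Oseq),
    isO u /\ Ounit K u /\ Oeq a (Omul K (Opow K (Opi K) r) u) /\
    Nat.modulo r d = Nat.modulo l d /\ pi_coef K u c.

Definition at_level (K : ramQ2) (d : nat) (a : Oseq) (l : nat) : Prop :=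
  exists c, level_coef K d a l c.

Fixpoint Osum (s : nat) (F : nat -> Oseq) : Oseq :=
  match s with
  | O => Ozero
  | S s' => Oadd (Osum s' F) (F s')
  end.

Definition diag_form (K : ramQ2) (d s : nat) (a x : nat -> Oseq) : Oseq :=
  Osum s (fun i => Omul K (a i) (Opow K (x i) d)).

(* Main.v *)
Require Import Defs.
From Stdlib Require Import ZArith Arith List Lia Ring Bool.

Module Comp.
Import ListNotations.
Open Scope bool_scope.
Open Scope Z_scope.

Definition zc (g : Z) : zq := (g, 0).
Definition zsub (x y : zq) := zq_add x (zq_opp y).
Definition zq_eqb (x y : zq) : bool := Z.eqb (fst x) (fst y) && Z.eqb (snd x) (snd y).
Definition red3 (x : zq) : zq := zq_red 3 x.
Definition ns8 : list Z := [0;1;2;3;4;5;6;7].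
Definition all64 : list zq := flat_map (fun a => map (fun b => (a,b)) ns8) ns8.

Definition R2 (K : ramQ2) : list zq :=
  match K with
  | Q2sqrtm1 | Q2sqrtm5 => [(1,0); (1,2); (1,4); (1,6); (3,0); (3,2); (3,4); (3,6)]
  | _ => [(1,0); (1,2); (3,0); (3,2); (5,0); (5,2); (7,0); (7,2)]
  end.
Definition R16 (K : ramQ2) : list zq :=
  match K with
  | Q2sqrtm1 | Q2sqrtm5 => [(0,1); (0,3); (0,5); (0,7); (1,0); (1,2); (1,4); (1,6); (2,1); (2,3); (2,5); (2,7); (3,0); (3,2); (3,4); (3,6)]
  | _ => [(1,0); (1,1); (1,2); (1,3); (3,0); (3,1); (3,2); (3,3); (5,0); (5,1); (5,2); (5,3); (7,0); (7,1); (7,2); (7,3)]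
  end.
Definition R4 (K : ramQ2) : list zq :=
  match K with
  | Q2sqrtm1 | Q2sqrtm5 => [(0,1); (0,3); (1,0); (1,2)]
  | _ => [(1,0); (1,1); (3,0); (3,1)]
  end.

Section S.
Variable K : ramQ2.
Local Notation zm := (zq_mul K).
Local Notation za := zq_add.
Local Notation pi := (piZ K).

Fixpoint zpow (x : zq) (e : nat) : zq :=
  match e with O => (1,0) | S e' => zm x (zpow x e') end.

Definition NormZ (x : zq) : Z := fst x * fst x - disc K * snd x * snd x.
Definition oddb (x : zq) : bool := Z.odd (NormZ x).

Definition in5b (x : zq) : bool :=
  let y := red3 x in zq_eqb y (0,0) || zq_eqb y (red3 (zm (zc 4) pi)).
Definition in3b (x : zq) : bool :=
  existsb (fun z => zq_eqb (red3 x) (red3 (zm (zc 2) (zm pi z)))) all64.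

Definition rho : zq := za (1,0) pi.
Definition cls (i : nat) : zq :=
  match i with O => (0,0) | 1%nat => (1,0) | _ => zm rho rho end.

Definition i012 : list nat := [0;1;2]%nat.
Definition i12 : list nat := [1;2]%nat.

Definition fourpi : zq := red3 (zm (zc 4) pi).
Definition Ps (b2 : zq) : list zq :=
  flat_map (fun s => flat_map (fun i2 =>
    let p := red3 (za (cls s) (zm b2 (cls i2))) in [p; red3 (za p fourpi)]) i012) i12.
Definition Qs (l : nat) (b3 b4 b5 : zq) : list zq :=
  flat_map (fun i3 => flat_map (fun i4 => map (fun i5 =>
    red3 (zq_opp (za (zm pi (za (zm b3 (cls i3)) (zm b4 (cls i4))))
             (zm (zpow pi l) (zm b5 (cls i5)))))) i012) i012) i012.
Definition checkA' (qs ps : list zq) : bool :=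
  existsb (fun q => existsb (fun p => zq_eqb q p) ps) qs.
Definition checkB (l : nat) (b3 b4 b5 : zq) : bool :=
  Nat.eqb l 3 && existsb (fun s => existsb (fun i4 => existsb (fun i5 =>
    in5b (za (za (zm b3 (cls s)) (zm b4 (cls i4))) (zm (zpow pi 2) (zm b5 (cls i5))))) i012) i012) i12.

Definition bigcheck : bool :=
  forallb (fun l => forallb (fun b5 => forallb (fun b3 => forallb (fun b4 =>
    let qs := Qs l b3 b4 b5 in
    forallb (fun b2 => if checkA' qs (Ps b2) then true else checkB l b3 b4 b5) (R2 K))
    (R16 K)) (R16 K)) (R4 K)) [2;3;4]%nat.

Definition repcheck : bool :=
  forallb (fun x => (negb (Z.odd (fst x) && Z.even (snd x)) || existsb (fun r => in5b (zsub x r)) (R2 K))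
     && (negb (oddb x) || existsb (fun r => in5b (zsub x r)) (R16 K))
     && (negb (oddb x) || existsb (fun r => in3b (zsub x r)) (R4 K))) all64.
End S.

Lemma bigcheck_ok K : bigcheck K = true.
Proof. destruct K; vm_compute; reflexivity. Qed.
Lemma repcheck_ok K : repcheck K = true.
Proof. destruct K; vm_compute; reflexivity. Qed.

End Comp.
Import Comp.

Import ListNotations.
Open Scope bool_scope.
Open Scope Z_scope.

Section T.
Variable K : ramQ2.
Local Notation zm := (zq_mul K).
Local Notation za := zq_add.
Local Notation pi := (piZ K).
Local Notation zpow := (zpow K).
Local Notation NormZ := (NormZ K).

Lemma zq_rth : @ring_theory zq (0,0) (1,0) zq_add (zq_mul K) zsub zq_opp (@eq zq).
Proof.
  constructor; intros; repeat match goal with x : prod _ _ |- _ => destruct x | x : zq |- _ => destruct x end;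
  unfold zsub, zq_add, zq_mul, zq_opp; cbn [fst snd]; f_equal; ring.
Qed.
Lemma zc_morph : ring_morph (R:=zq) (0,0) (1,0) zq_add (zq_mul K) zsub zq_opp (@eq zq)
   0 1 Z.add Z.mul Z.sub Z.opp Z.eqb zc.
Proof.
  constructor; intros; unfold zc, zsub, zq_add, zq_mul, zq_opp; cbn [fst snd]; try (f_equal; ring).
  apply Z.eqb_eq in H; subst; auto.
Qed.
Ltac zcst t := match t with zc ?z => match isZcst z with true => z | _ => constr:(NotConstant) end | _ => constr:(NotConstant) end.
Add Ring zqR : zq_rth (morphism zc_morph, constants [zcst]).

Lemma zq_rth2 : @ring_theory (Z*Z)%type (0,0) (1,0) zq_add (zq_mul K) zsub zq_opp (@eq (Z*Z)%type).
Proof. exact zq_rth. Qed.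
Lemma zc_morph2 : ring_morph (R:=(Z*Z)%type) (0,0) (1,0) zq_add (zq_mul K) zsub zq_opp (@eq (Z*Z)%type)
   0 1 Z.add Z.mul Z.sub Z.opp Z.eqb zc.
Proof. exact zc_morph. Qed.
Add Ring zqR2 : zq_rth2 (morphism zc_morph2, constants [zcst]).
Ltac zring := match goal with |- @eq _ ?a ?b => let T := type of a in change (@eq T a b) end; ring.
Lemma zc_mul a b : zc (a * b) = zm (zc a) (zc b).
Proof. unfold zc, zq_mul; cbn [fst snd]; f_equal; ring. Qed.
Lemma zc_add a b : zc (a + b) = za (zc a) (zc b).
Proof. unfold zc, zq_add; cbn [fst snd]; f_equal; ring. Qed.
Lemma zc_opp a : zc (- a) = zq_opp (zc a).
Proof. reflexivity. Qed.
Lemma zm_zc g w : zm (zc g) w = (g * fst w, g * snd w).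
Proof. destruct w; unfold zc, zq_mul; cbn [fst snd]; f_equal; ring. Qed.

Lemma zpow_add x a b : zpow x (a + b) = zm (zpow x a) (zpow x b).
Proof. induction a; cbn [Comp.zpow Nat.add]. zring. rewrite IHa. zring. Qed.
Lemma zpow_mulx x y e : zpow (zm x y) e = zm (zpow x e) (zpow y e).
Proof. induction e; cbn [Comp.zpow]. zring. rewrite IHe. zring. Qed.
Lemma zpow_mul x a b : zpow (zpow x a) b = zpow x (a * b).
Proof. induction b; cbn [Comp.zpow]. rewrite Nat.mul_0_r; reflexivity.
  rewrite IHb. replace (a * S b)%nat with (a + a * b)%nat by lia. rewrite zpow_add. reflexivity. Qed.
Lemma zpow_zero e : zpow (0,0) (S e) = (0,0).
Proof. cbn [Comp.zpow]. zring. Qed.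

Lemma Opow_at s e n : Opow K s e n = zpow (s n) e.
Proof. induction e; cbn [Opow Comp.zpow]. reflexivity. unfold Omul. rewrite IHe. reflexivity. Qed.

Definition cong (g : Z) (x y : zq) : Prop := exists w, x = za y (zm (zc g) w).

Lemma cong_refl g x : cong g x x.
Proof. exists (0,0). zring. Qed.
Lemma cong_sym g x y : cong g x y -> cong g y x.
Proof. intros [w ->]. exists (zq_opp w). zring. Qed.
Lemma cong_trans g x y z : cong g x y -> cong g y z -> cong g x z.
Proof. intros [w ->] [v ->]. exists (za v w). zring. Qed.
Lemma cong_add g x y x' y' : cong g x x' -> cong g y y' -> cong g (za x y) (za x' y').
Proof. intros [w ->] [v ->]. exists (za w v). zring. Qed.
Lemma cong_opp g x y : cong g x y -> cong g (zq_opp x) (zq_opp y).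
Proof. intros [w ->]. exists (zq_opp w). zring. Qed.
Lemma cong_mul g x y x' y' : cong g x x' -> cong g y y' -> cong g (zm x y) (zm x' y').
Proof. intros [w ->] [v ->]. exists (za (za (zm w y') (zm x' v)) (zm (zc g) (zm w v))). zring. Qed.
Lemma cong_pow g x x' e : cong g x x' -> cong g (zpow x e) (zpow x' e).
Proof. intros H; induction e; cbn [Comp.zpow]. apply cong_refl. apply cong_mul; auto. Qed.
Lemma cong_divides g h x y : (g | h) -> cong h x y -> cong g x y.
Proof. intros [q ->] [w ->]. exists (zm (zc q) w). rewrite zc_mul. zring. Qed.
Lemma cong_mul_l g z x y : cong g x y -> cong g (zm z x) (zm z y).
Proof. intros; apply cong_mul; auto using cong_refl. Qed.

Lemma red_cong n x y : zq_red n x = zq_red n y <-> cong (2 ^ Z.of_nat n) x y.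
Proof.
  assert (HM : 0 < 2 ^ Z.of_nat n) by (apply Z.pow_pos_nonneg; lia).
  set (M := 2 ^ Z.of_nat n) in *. unfold zq_red. fold M.
  destruct x as [x1 x2], y as [y1 y2]; cbn [fst snd]. split.
  - intros H. injection H as H1 H2.
    exists (x1 / M - y1 / M, x2 / M - y2 / M). rewrite zm_zc. cbn [fst snd].
    unfold zq_add; cbn [fst snd].
    pose proof (Z.div_mod x1 M ltac:(lia)). pose proof (Z.div_mod y1 M ltac:(lia)).
    pose proof (Z.div_mod x2 M ltac:(lia)). pose proof (Z.div_mod y2 M ltac:(lia)).
    f_equal; lia.
  - intros [w Hw]. rewrite zm_zc in Hw. unfold zq_add in Hw; cbn [fst snd] in Hw.
    injection Hw as -> ->. f_equal; rewrite Z.mul_comm; apply Z_mod_plus_full.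
Qed.

Lemma pow2_divides (n N : nat) : (n <= N)%nat -> (2 ^ Z.of_nat n | 2 ^ Z.of_nat N).
Proof. intros H. exists (2 ^ Z.of_nat (N - n)). rewrite <- Z.pow_add_r by lia.
  f_equal; lia. Qed.

Lemma isO_cong s n : isO s -> cong (2 ^ Z.of_nat n) (s (S n)) (s n).
Proof. intros H. apply red_cong, H. Qed.
Lemma isO_le s n N : isO s -> (n <= N)%nat -> cong (2 ^ Z.of_nat n) (s N) (s n).
Proof.
  intros H HnN. induction HnN. apply cong_refl.
  eapply cong_trans; [| exact IHHnN].
  eapply cong_divides; [apply pow2_divides; exact HnN| apply isO_cong, H].
Qed.
Lemma Oeq_cong s t n : Oeq s t -> cong (2 ^ Z.of_nat n) (s n) (t n).
Proof. intros H; apply red_cong, H. Qed.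
Lemma cong_Oeq s t : (forall n, cong (2 ^ Z.of_nat n) (s n) (t n)) -> Oeq s t.
Proof. intros H n; apply red_cong, H. Qed.
Lemma cong_isO s : (forall n, cong (2 ^ Z.of_nat n) (s (S n)) (s n)) -> isO s.
Proof. intros H n; apply red_cong, H. Qed.


Definition oddN (x : zq) : Prop := Z.odd (NormZ x) = true.

Lemma NormZ_mul x y : NormZ (zm x y) = NormZ x * NormZ y.
Proof. destruct x, y; unfold Comp.NormZ, zq_mul; cbn [fst snd]; ring. Qed.
Lemma NormZ_pow x e : NormZ (zpow x e) = NormZ x ^ Z.of_nat e.
Proof. induction e. cbn [Comp.zpow Z.of_nat]. rewrite Z.pow_0_r. unfold Comp.NormZ; cbn [fst snd]; ring. cbn [Comp.zpow]. rewrite NormZ_mul, IHe, Nat2Z.inj_succ, Z.pow_succ_r by lia. ring. Qed.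
Lemma oddN_mul x y : oddN x -> oddN y -> oddN (zm x y).
Proof. unfold oddN; intros; rewrite NormZ_mul, Z.odd_mul, H, H0; reflexivity. Qed.
Lemma oddN_pow x e : oddN x -> oddN (zpow x e).
Proof. intros H; induction e. unfold oddN, Comp.NormZ; cbn [Comp.zpow fst snd]. rewrite Z.mul_0_r, Z.sub_0_r; reflexivity. cbn [Comp.zpow]. apply oddN_mul; auto. Qed.
Lemma oddN_zc g : Z.odd g = true -> oddN (zc g).
Proof. unfold oddN, Comp.NormZ, zc; cbn [fst snd]; intros H.
  replace (g * g - disc K * 0 * 0) with (g * g) by ring. rewrite Z.odd_mul, H; reflexivity. Qed.

Lemma cong_norm g x y : cong g x y -> (g | NormZ x - NormZ y).
Proof. intros [w ->]. rewrite zm_zc. destruct y as [y1 y2], w as [w1 w2].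
  unfold Comp.NormZ, zq_add; cbn [fst snd].
  exists (2 * y1 * w1 + g * w1 * w1 - disc K * (2 * y2 * w2 + g * w2 * w2)). ring. Qed.

Lemma odd_div2 a b : (2 | a - b) -> Z.odd a = Z.odd b.
Proof. intros [q Hq]. replace a with (b + 2 * q) by lia. rewrite Z.odd_add_mul_2. reflexivity. Qed.

Lemma oddN_cong2 x y : cong 2 x y -> oddN y -> oddN x.
Proof. unfold oddN; intros H Hy. rewrite <- Hy. apply odd_div2, cong_norm, H. Qed.

Lemma sq1 w : oddN w -> exists g, zm w w = za (1,0) (zm (zc 2) g).
Proof.
  destruct w as [p q]; unfold oddN, Comp.NormZ; cbn [fst snd]; intros H.
  assert (Hodd : Z.odd (p * p + disc K * q * q) = true).
  { rewrite <- H. apply odd_div2. exists (disc K * q * q). ring. }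
  destruct (Zodd_ex (p * p + disc K * q * q)) as [k Hk]. { apply Zodd_bool_iff. exact Hodd. }
  exists (k, p * q). rewrite zm_zc. unfold zq_mul, zq_add; cbn [fst snd]. f_equal; lia.
Qed.

Lemma NormZ_one : NormZ (1,0) = 1.
Proof. unfold Comp.NormZ; cbn [fst snd]; ring. Qed.

Lemma unit_odd u : isO u -> Ounit K u -> forall n, (1 <= n)%nat -> oddN (u n).
Proof.
  intros Hu [v [Hv Huv]] n Hn.
  assert (H1 : oddN (u 1%nat)).
  { pose proof (Oeq_cong _ _ 1 Huv) as Hc. cbn in Hc. unfold Omul, Oone, Ocst in Hc.
    apply cong_norm in Hc. rewrite NormZ_mul in Hc. apply odd_div2 in Hc.
    unfold oddN. rewrite Z.odd_mul in Hc. rewrite NormZ_one in Hc. simpl in Hc.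
    destruct (Z.odd (NormZ (u 1%nat))); auto. }
  eapply oddN_cong2; [|exact H1].
  eapply cong_divides; [|apply isO_le; eauto]. change 2 with (2 ^ Z.of_nat 1). apply pow2_divides; lia.
Qed.

Lemma zc_succ (e : nat) : zc (Z.of_nat (S e)) = za (zc (Z.of_nat e)) (1,0).
Proof. rewrite Nat2Z.inj_succ. unfold Z.succ. rewrite zc_add. reflexivity. Qed.

Lemma binom x h e : exists R, zpow (za x h) (S e) =
  za (za (zpow x (S e)) (zm (zc (Z.of_nat (S e))) (zm (zpow x e) h))) (zm (zm h h) R).
Proof.
  induction e as [|e [R IH]].
  - exists (0,0). cbn [Comp.zpow]. change (Z.of_nat 1) with 1. zring.
  - exists (za (zm (zc (Z.of_nat (S e))) (zpow x e)) (zm (za x h) R)).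
    change (zpow (za x h) (S (S e))) with (zm (za x h) (zpow (za x h) (S e))).
    rewrite IH, !zc_succ. cbn [Comp.zpow]. zring.
Qed.

Definition P5 (x : zq) : Prop := exists z w, x = za (zm (zc 4) (zm pi z)) (zm (zc 8) w).
Definition c5 (x y : zq) : Prop := P5 (zsub x y).

Lemma P5_0 : P5 (0,0).
Proof. exists (0,0), (0,0). zring. Qed.
Lemma c5_refl x : c5 x x.
Proof. exists (0,0), (0,0). unfold zsub. zring. Qed.
Lemma c5_sym x y : c5 x y -> c5 y x.
Proof. intros [z [w H]]. exists (zq_opp z), (zq_opp w). unfold c5, P5, zsub in *.
  replace y with (za x (zq_opp (zsub x y))) by (unfold zsub; zring). unfold c5, P5, zsub in *. rewrite H. zring. Qed.
Lemma c5_trans x y z : c5 x y -> c5 y z -> c5 x z.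
Proof. intros [a [b H1]] [c [e H2]]. exists (za a c), (za b e). unfold c5, P5, zsub in *.
  replace (za x (zq_opp z)) with (za (za x (zq_opp y)) (za y (zq_opp z))) by zring.
  rewrite H1, H2. zring. Qed.
Lemma c5_add x y x' y' : c5 x x' -> c5 y y' -> c5 (za x y) (za x' y').
Proof. intros [a [b H1]] [c [e H2]]. exists (za a c), (za b e). unfold c5, P5, zsub in *.
  replace (za (za x y) (zq_opp (za x' y'))) with (za (za x (zq_opp x')) (za y (zq_opp y'))) by zring.
  rewrite H1, H2. zring. Qed.
Lemma c5_mul x y x' y' : c5 x x' -> c5 y y' -> c5 (zm x y) (zm x' y').
Proof. intros [a [b H1]] [c [e H2]]. unfold c5, P5, zsub in *.
  exists (za (zm a y) (zm x' c)), (za (zm b y) (zm x' e)).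
  replace (za (zm x y) (zq_opp (zm x' y'))) with (za (zm (za x (zq_opp x')) y) (zm x' (za y (zq_opp y')))) by zring.
  rewrite H1, H2. zring. Qed.
Lemma c5_of_cong8 x y : cong 8 x y -> c5 x y.
Proof. intros [w ->]. exists (0,0), w. unfold zsub. zring. Qed.
Lemma P5_c5 x : P5 x <-> c5 x (0,0).
Proof. unfold c5, zsub. replace (za x (zq_opp (0,0))) with x by zring. tauto. Qed.

Lemma zq_eqb_eq x y : zq_eqb x y = true -> x = y.
Proof. destruct x, y; unfold zq_eqb; cbn [fst snd]; intros H.
  apply andb_prop in H as [H1 H2]. apply Z.eqb_eq in H1, H2. subst; reflexivity. Qed.

Lemma red3_cong x y : red3 x = red3 y -> cong 8 x y.
Proof. intros H. apply (red_cong 3). exact H. Qed.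

Lemma in5b_sound x : in5b K x = true -> P5 x.
Proof.
  unfold in5b. intros H. apply orb_prop in H as [H|H]; apply zq_eqb_eq in H.
  - change (0,0) with (red3 (0,0)) in H. apply red3_cong in H as [w ->].
    exists (0,0), w. zring.
  - apply red3_cong in H as [w ->]. exists (1,0), w. zring.
Qed.

Lemma in3b_sound x : in3b K x = true -> exists z w, x = za (zm (zc 2) (zm pi z)) (zm (zc 8) w).
Proof.
  unfold in3b. intros H. apply existsb_exists in H as [z [_ H]]. apply zq_eqb_eq, red3_cong in H as [w ->].
  exists z, w. reflexivity.
Qed.

Definition eta : zq :=
  match K with Q2sqrt2 => (1,0) | Q2sqrtm2 => (-1,0) | Q2sqrt10 => (5,0) | Q2sqrtm10 => (-5,0)
  | Q2sqrtm1 => (0,1) | Q2sqrtm5 => (-2,1) end.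
Lemma pi2 : zm pi pi = zm (zc 2) eta.
Proof. unfold eta; destruct K; reflexivity. Qed.
Lemma eta_odd : oddN eta.
Proof. unfold oddN, eta; destruct K; reflexivity. Qed.
Lemma Npi : exists o, NormZ pi = 2 * o /\ Z.odd o = true.
Proof. destruct K; [exists (-1)|exists 1|exists (-5)|exists 5|exists 1|exists 3]; split; reflexivity. Qed.
Lemma rho_odd : oddN (rho K).
Proof. unfold oddN; destruct K; reflexivity. Qed.
Lemma sig4 : in5b K (zsub (zm (zm (rho K) (rho K)) (zm (rho K) (rho K))) (1,0)) = true.
Proof. destruct K; vm_compute; reflexivity. Qed.

Lemma zc_nat_mul (a b : nat) : zc (Z.of_nat (a * b)) = zm (zc (Z.of_nat a)) (zc (Z.of_nat b)).
Proof. rewrite Nat2Z.inj_mul, zc_mul. reflexivity. Qed.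

Lemma odd_pos' m : (1 <= m)%nat -> exists e, (2 * m = S e)%nat.
Proof. intros H. exists (2 * m - 1)%nat. lia. Qed.
Lemma cong_refl_eq g x y : x = y -> cong g x y.
Proof. intros ->. apply cong_refl. Qed.

Lemma odd_pos m : Nat.odd m = true -> exists e, (2 * m = S e)%nat.
Proof. intros H. destruct m. discriminate. exists (S (2 * m)). lia. Qed.

Lemma oddN_zcm m : Nat.odd m = true -> oddN (zc (Z.of_nat m)).
Proof. intros H. apply oddN_zc. apply Nat.odd_spec in H as [j ->].
  replace (Z.of_nat (2 * j + 1)) with (1 + 2 * Z.of_nat j) by lia. rewrite Z.odd_add_mul_2. reflexivity. Qed.

Lemma hensel_start m (c0 T0 x0 : zq) : Nat.odd m = true -> oddN c0 -> oddN x0 ->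
  P5 (za (zm c0 (zpow x0 (2 * m))) T0) ->
  exists x1, oddN x1 /\ cong 2 x1 x0 /\ cong 8 (za (zm c0 (zpow x1 (2 * m))) T0) (0,0).
Proof.
  intros Hm Hc Hx [z [w E1]].
  destruct (odd_pos m Hm) as [e He].
  set (W := zm c0 (zm (zc (Z.of_nat m)) (zm eta (zpow x0 e)))).
  assert (HW : oddN W) by (apply oddN_mul; auto; apply oddN_mul; [apply oddN_zcm; auto| apply oddN_mul; [apply eta_odd | apply oddN_pow; auto]]).
  destruct (sq1 W HW) as [g Hg].
  set (t := zq_opp (zm z W)).
  set (h := zm (zc 2) (zm pi (zm eta t))).
  exists (za x0 h). split; [|split].
  - eapply oddN_cong2; [|exact Hx]. exists (zm pi (zm eta t)). reflexivity.
  - exists (zm pi (zm eta t)). reflexivity.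
  - rewrite He in *. destruct (binom x0 h e) as [R HR]. rewrite HR.
    assert (HT : T0 = zsub (za (zm (zc 4) (zm pi z)) (zm (zc 8) w)) (zm c0 (zpow x0 (S e)))).
    { rewrite <- E1. unfold zsub. zring. }
    rewrite HT. replace (Z.of_nat (S e)) with (2 * Z.of_nat m) by lia. rewrite zc_mul.
    assert (Hhh : zm h h = zm (zc 8) (zm eta (zm eta (zm eta (zm t t))))).
    { unfold h. replace (zm (zm (zc 2) (zm pi (zm eta t))) (zm (zc 2) (zm pi (zm eta t))))
        with (zm (zc 4) (zm (zm pi pi) (zm eta (zm eta (zm t t))))) by zring.
      rewrite pi2. zring. }
    assert (Hmid : zm (zc 2) (zm (zc (Z.of_nat m)) (zm (zpow x0 e) h)) = zm (zc 4) (zm pi (zm (zc (Z.of_nat m)) (zm eta (zm (zpow x0 e) t))))).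
    { unfold h. zring. }
    assert (HWt : zm W t = zq_opp (zm z (zm W W))) by (unfold t; zring).
    exists (za (zq_opp (zm pi (zm z g))) (za w (zm c0 (zm (zm eta (zm eta (zm eta (zm t t)))) R)))).
    replace (za (zm c0 (za (za (zpow x0 (S e)) (zm (zm (zc 2) (zc (Z.of_nat m))) (zm (zpow x0 e) h))) (zm (zm h h) R)))
      (zsub (za (zm (zc 4) (zm pi z)) (zm (zc 8) w)) (zm c0 (zpow x0 (S e)))))
    with (za (za (zm (zc 4) (zm pi (za z (zm W t)))) (zm (zc 8) w)) (zm c0 (zm (zm h h) R)))
    by (unfold W, h, zsub; zring).
    rewrite HWt, Hg, Hhh. zring.
Qed.

Definition hdiv (n : nat) (y : zq) : zq := (fst y / 2 ^ Z.of_nat n, snd y / 2 ^ Z.of_nat n).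
Definition hF (m : nat) (c1 T1 x : zq) : zq := za (zm c1 (zpow x (2 * m))) T1.
Definition hW (m : nat) (c1 x : zq) : zq := zm c1 (zm (zc (Z.of_nat m)) (zpow x (2 * m - 1))).
Definition hstep (m : nat) (c1 T1 : zq) (n : nat) (x : zq) : zq :=
  za x (zm (zc (2 ^ Z.of_nat (n - 1))) (zq_opp (zm (hdiv n (hF m c1 T1 x)) (hW m c1 x)))).

Lemma hdiv_ok n y w : y = za (0,0) (zm (zc (2 ^ Z.of_nat n)) w) -> hdiv n y = w.
Proof.
  intros ->. rewrite zm_zc. destruct w as [w1 w2]. unfold hdiv, zq_add; cbn [fst snd].
  assert (0 < 2 ^ Z.of_nat n) by (apply Z.pow_pos_nonneg; lia).
  f_equal; rewrite Z.add_0_l, Z.mul_comm, Z.div_mul; lia.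
Qed.

Lemma hstep_ok m c1 T1 n x : Nat.odd m = true -> (3 <= n)%nat -> oddN c1 -> oddN x ->
  cong (2 ^ Z.of_nat n) (hF m c1 T1 x) (0,0) ->
  cong (2 ^ Z.of_nat (S n)) (hF m c1 T1 (hstep m c1 T1 n x)) (0,0) /\
  cong (2 ^ Z.of_nat (n - 1)) (hstep m c1 T1 n x) x.
Proof.
  intros Hm Hn Hc Hx [w Hw].
  split; [| exists (zq_opp (zm (hdiv n (hF m c1 T1 x)) (hW m c1 x))); reflexivity].
  assert (HW : oddN (hW m c1 x)) by (apply oddN_mul; auto; apply oddN_mul; [apply oddN_zcm; auto| apply oddN_pow; auto]).
  destruct (sq1 _ HW) as [g Hg].
  unfold hstep. rewrite (hdiv_ok _ _ _ Hw).
  destruct (odd_pos m Hm) as [e He].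
  replace (2 * m - 1)%nat with e in * by lia.
  set (W := hW m c1 x) in *.
  set (t := zq_opp (zm w W)).
  destruct (Nat.le_exists_sub 3 n Hn) as [k [-> _]].
  set (Q := 2 ^ Z.of_nat k).
  assert (E8 : 2 ^ Z.of_nat (k + 3) = 8 * Q) by (unfold Q; rewrite Nat2Z.inj_add, Z.pow_add_r by lia; change (2 ^ Z.of_nat 3) with 8; ring).
  assert (E4 : 2 ^ Z.of_nat (k + 3 - 1) = 4 * Q) by (unfold Q; replace (k+3-1)%nat with (k+2)%nat by lia; rewrite Nat2Z.inj_add, Z.pow_add_r by lia; change (2 ^ Z.of_nat 2) with 4; ring).
  assert (E16 : 2 ^ Z.of_nat (S (k + 3)) = 16 * Q) by (unfold Q; replace (S (k+3)) with (k+4)%nat by lia; rewrite Nat2Z.inj_add, Z.pow_add_r by lia; change (2 ^ Z.of_nat 4) with 16; ring).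
  rewrite E8 in Hw. rewrite E4, E16. rewrite !zc_mul in *.
  fold t.
  set (h := zm (zm (zc 4) (zc Q)) t).
  unfold hF in Hw |- *. rewrite He in *.
  destruct (binom x h e) as [R HR]. rewrite HR.
  assert (HT : T1 = zsub (zm (zm (zc 8) (zc Q)) w) (zm c1 (zpow x (S e)))).
  { replace (zm (zm (zc 8) (zc Q)) w) with (za (0,0) (zm (zm (zc 8) (zc Q)) w)) by zring.
    rewrite <- Hw. unfold zsub. zring. }
  rewrite HT. replace (Z.of_nat (S e)) with (2 * Z.of_nat m) by lia. rewrite zc_mul.
  assert (HWt : zm W t = zq_opp (zm w (zm W W))) by (unfold t; zring).
  assert (HX : za (zm c1 (za (za (zpow x (S e)) (zm (zm (zc 2) (zc (Z.of_nat m))) (zm (zpow x e) h))) (zm (zm h h) R)))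
       (zsub (zm (zm (zc 8) (zc Q)) w) (zm c1 (zpow x (S e)))) = (za (zm (zm (zc 8) (zc Q)) (za w (zm W t))) (zm c1 (zm (zm h h) R)))).
  { unfold W, hW, h, zsub. replace (2 * m - 1)%nat with e by lia. zring. }
  rewrite HX.
  rewrite HWt, Hg.
  exists (za (zq_opp (zm w g)) (zm (zc Q) (zm c1 (zm (zm t t) R)))).
  rewrite zc_mul. unfold h. zring.
Qed.

Lemma hF_cong g m c c' T T' x : cong g c c' -> cong g T T' -> cong g (hF m c T x) (hF m c' T' x).
Proof. intros. unfold hF. apply cong_add; auto. apply cong_mul; auto. apply cong_refl. Qed.

Fixpoint hxs (m : nat) (c T : Oseq) (x1 : zq) (n : nat) : zq :=
  match n with
  | O => x1
  | S n' => if (n' <? 3)%nat then x1 else hstep m (c (S n')) (T (S n')) n' (hxs m c T x1 n')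
  end.

Lemma hxs_small m c T x1 n : (n <= 3)%nat -> hxs m c T x1 n = x1.
Proof. intros H. destruct n. reflexivity. cbn [hxs]. replace (n <? 3)%nat with true. reflexivity.
  symmetry; apply Nat.ltb_lt; lia. Qed.
Lemma hxs_big m c T x1 n : (3 <= n)%nat -> hxs m c T x1 (S n) = hstep m (c (S n)) (T (S n)) n (hxs m c T x1 n).
Proof. intros H. cbn [hxs]. replace (n <? 3)%nat with false. reflexivity.
  symmetry; apply Nat.ltb_ge; lia. Qed.

Lemma pow2_nat (n : nat) : (1 <= n)%nat -> (2 | 2 ^ Z.of_nat n).
Proof. intros H. change 2 with (2 ^ Z.of_nat 1) at 1. apply pow2_divides; lia. Qed.

Lemma hensel m c T x1 : Nat.odd m = true -> isO c -> (forall n, (1 <= n)%nat -> oddN (c n)) ->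
  isO T -> oddN x1 -> cong 8 (hF m (c 3%nat) (T 3%nat) x1) (0,0) ->
  exists X : Oseq, isO X /\ (forall n, oddN (X n)) /\
    forall n, cong (2 ^ Z.of_nat n) (hF m (c n) (T n) (X n)) (0,0).
Proof.
  intros Hm Hc Hco HT Hx H3.
  assert (Inv : forall n, (3 <= n)%nat -> cong (2 ^ Z.of_nat n) (hF m (c n) (T n) (hxs m c T x1 n)) (0,0) /\ oddN (hxs m c T x1 n)).
  { induction n as [|n IH]; intros Hn. lia.
    destruct (Nat.eq_dec n 2) as [->|Hn2].
    - rewrite hxs_small by lia. split; auto.
    - assert (H3n : (3 <= n)%nat) by lia. destruct (IH H3n) as [IH1 IH2].
      rewrite hxs_big by lia.
      assert (Hn' : cong (2 ^ Z.of_nat n) (hF m (c (S n)) (T (S n)) (hxs m c T x1 n)) (0,0)).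
      { eapply cong_trans; [|exact IH1]. apply hF_cong; apply isO_cong; auto. }
      destruct (hstep_ok m (c (S n)) (T (S n)) n (hxs m c T x1 n) Hm H3n (Hco (S n) ltac:(lia)) IH2 Hn') as [A B].
      split; auto. eapply oddN_cong2; [|exact IH2]. eapply cong_divides; [|exact B]. apply pow2_nat; lia. }
  exists (fun n => hxs m c T x1 (S n)). split; [|split].
  - apply cong_isO. intros n.
    destruct (Nat.lt_ge_cases (S n) 3).
    + rewrite !hxs_small by lia. apply cong_refl.
    + rewrite hxs_big by lia.
      assert (Hn' : cong (2 ^ Z.of_nat (S n)) (hF m (c (S (S n))) (T (S (S n))) (hxs m c T x1 (S n))) (0,0)).
      { eapply cong_trans; [|exact (proj1 (Inv _ H))]. apply hF_cong; apply isO_cong; auto. }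
      destruct (hstep_ok m (c (S (S n))) (T (S (S n))) (S n) _ Hm H (Hco (S (S n)) ltac:(lia)) (proj2 (Inv _ H)) Hn') as [_ B].
      replace (S n - 1)%nat with n in B by lia. exact B.
  - intros n. destruct (Nat.lt_ge_cases (S n) 3).
    + rewrite hxs_small by lia. auto.
    + apply Inv; auto.
  - intros n. destruct (Nat.lt_ge_cases (S n) 3).
    + rewrite hxs_small by lia.
      apply cong_trans with (y := hF m (c 3%nat) (T 3%nat) x1); [apply hF_cong; apply cong_sym, isO_le; auto; lia|].
      eapply cong_divides; [|exact H3]. change 8 with (2 ^ Z.of_nat 3). apply pow2_divides; lia.
    + destruct (Inv _ H) as [A _].
      apply cong_trans with (y := hF m (c (S n)) (T (S n)) (hxs m c T x1 (S n))); [apply hF_cong; apply cong_sym, isO_cong; auto|].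
      eapply cong_divides; [|exact A]. apply pow2_divides; lia.
Qed.

Lemma two_adic (r r' : nat) A B : (r < r')%nat -> Z.odd A = true ->
  (2 ^ (Z.of_nat r + 1) | 2 ^ Z.of_nat r * A - 2 ^ Z.of_nat r' * B) -> False.
Proof.
  intros Hr HA Hd.
  replace (2 ^ Z.of_nat r' * B) with (2 ^ Z.of_nat r * (2 * (2 ^ (Z.of_nat r' - Z.of_nat r - 1) * B))) in Hd.
  2:{ replace (Z.of_nat r') with (Z.of_nat r + 1 + (Z.of_nat r' - Z.of_nat r - 1)) at 2 by lia.
      rewrite !Z.pow_add_r by lia. change (2 ^ 1) with 2. ring. }
  rewrite <- Z.mul_sub_distr_l, Z.pow_add_r in Hd by lia.
  apply Z.mul_divide_cancel_l in Hd. 2:{ apply Z.pow_nonzero; lia. }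
  change (2 ^ 1) with 2 in Hd.
  apply odd_div2 in Hd. rewrite HA in Hd. rewrite Z.odd_mul in Hd. simpl in Hd. discriminate.
Qed.

Lemma norm_pi_pow r u : oddN u -> exists A, Z.odd A = true /\ NormZ (zm (zpow pi r) u) = 2 ^ Z.of_nat r * A.
Proof.
  intros Hu. destruct Npi as [o [Ho Hoo]].
  exists (o ^ Z.of_nat r * NormZ u). split.
  - rewrite Z.odd_mul, Hu. destruct r. reflexivity. rewrite Z.odd_pow, Hoo by lia. reflexivity.
  - rewrite NormZ_mul, NormZ_pow, Ho, Z.pow_mul_l. ring.
Qed.

Lemma val_unique n r r' u u' : (r < n)%nat -> (r' < n)%nat -> oddN u -> oddN u' ->
  cong (2 ^ Z.of_nat n) (zm (zpow pi r) u) (zm (zpow pi r') u') -> r = r'.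
Proof.
  intros Hr Hr' Hu Hu' Hc. apply cong_norm in Hc.
  destruct (norm_pi_pow r u Hu) as [A [HA EA]].
  destruct (norm_pi_pow r' u' Hu') as [B [HB EB]].
  rewrite EA, EB in Hc.
  destruct (Nat.lt_total r r') as [H|[H|H]]; auto; exfalso.
  - apply (two_adic r r' A B H HA). eapply Z.divide_trans; [|exact Hc].
    replace (Z.of_nat r + 1) with (Z.of_nat (S r)) by lia. apply pow2_divides; lia.
  - apply (two_adic r' r B A H HB).
    replace (2 ^ Z.of_nat r' * B - 2 ^ Z.of_nat r * A) with (- (2 ^ Z.of_nat r * A - 2 ^ Z.of_nat r' * B)) by ring.
    apply Z.divide_opp_r. eapply Z.divide_trans; [|exact Hc].
    replace (Z.of_nat r' + 1) with (Z.of_nat (S r')) by lia. apply pow2_divides; lia.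
Qed.

Lemma Opi_pow_at t X n : Omul K (Opow K (Opi K) t) X n = zm (zpow pi t) (X n).
Proof. unfold Omul. rewrite Opow_at. reflexivity. Qed.

Lemma nontriv t X : (forall n, oddN (X n)) -> ~ Oeq (Omul K (Opow K (Opi K) t) X) Ozero.
Proof.
  intros HX H. set (n := (t + 2)%nat).
  pose proof (Oeq_cong _ _ n H) as Hc. rewrite Opi_pow_at in Hc. unfold Ozero, Ocst in Hc.
  assert (Hc2 : cong (2 ^ Z.of_nat n) (zm (zpow pi (S t)) (X n)) (0,0)).
  { replace (zm (zpow pi (S t)) (X n)) with (zm pi (zm (zpow pi t) (X n))) by (cbn [Comp.zpow]; zring).
    replace (0,0) with (zm pi (0,0)) by zring. apply cong_mul_l. exact Hc. }
  assert (t = S t). { apply (val_unique n t (S t) (X n) (X n)); auto; try lia.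
    eapply cong_trans; [exact Hc| apply cong_sym; exact Hc2]. }
  lia.
Qed.

Definition yv (m i : nat) : zq :=
  match i with O => (0,0) | 1%nat => (1,0) | _ => zpow (rho K) m end.

Lemma zpow_one e : zpow (1,0) e = (1,0).
Proof. induction e. reflexivity. cbn [Comp.zpow]. rewrite IHe. zring. Qed.

Lemma c5_pow_sig j : c5 (zpow (zm (zm (rho K) (rho K)) (zm (rho K) (rho K))) j) (1,0).
Proof.
  induction j. apply c5_refl. cbn [Comp.zpow]. replace (1,0) with (zm (1,0) (1,0)) by zring.
  apply c5_mul; auto. apply in5b_sound, sig4.
Qed.

Lemma yv_c5 m i : Nat.odd m = true -> c5 (zpow (yv m i) (2 * m)) (cls K i).
Proof.
  intros Hm. destruct (odd_pos m Hm) as [e He].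
  destruct i as [|[|i]]; cbn [yv cls].
  - rewrite He, zpow_zero. apply c5_refl.
  - rewrite zpow_one. apply c5_refl.
  - rewrite zpow_mul. apply Nat.odd_spec in Hm as [j ->].
    replace ((2 * j + 1) * (2 * (2 * j + 1)))%nat with (2 + 4 * (2 * (j * j + j)))%nat by lia.
    rewrite zpow_add, <- zpow_mul.
    replace (zpow (rho K) 4) with (zm (zm (rho K) (rho K)) (zm (rho K) (rho K))) by (cbn [Comp.zpow]; zring).
    replace (zpow (rho K) 2) with (zm (rho K) (rho K)) by (cbn [Comp.zpow]; zring).
    apply c5_trans with (y := zm (zm (rho K) (rho K)) (1,0)).
    + apply c5_mul. apply c5_refl. apply c5_pow_sig.
    + replace (zm (zm (rho K) (rho K)) (1,0)) with (zm (rho K) (rho K)) by zring. apply c5_refl.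
Qed.

Lemma yv_odd m i : (1 <= i)%nat -> oddN (yv m i).
Proof. intros H. destruct i as [|[|i]]. lia. cbn [yv]. unfold oddN; rewrite NormZ_one; reflexivity.
  cbn [yv]. apply oddN_pow, rho_odd. Qed.

Lemma red3_idem x : red3 (red3 x) = red3 x.
Proof. unfold red3, zq_red. cbn [fst snd]. f_equal; apply Z.mod_mod; change (2 ^ Z.of_nat 3) with 8; lia. Qed.
Lemma cong8_red3 x : cong 8 x (red3 x).
Proof. apply (red_cong 3). symmetry. apply red3_idem. Qed.

Lemma ns8_in a : 0 <= a < 8 -> In a ns8.
Proof. intros H. unfold ns8. assert (a = 0 \/ a = 1 \/ a = 2 \/ a = 3 \/ a = 4 \/ a = 5 \/ a = 6 \/ a = 7) by lia.
  destruct H0 as [->|[->|[->|[->|[->|[->|[->| ->]]]]]]]; simpl; auto 10. Qed.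
Lemma in_all64 x : In (red3 x) all64.
Proof.
  unfold red3, zq_red, all64. change (2 ^ Z.of_nat 3) with 8. apply in_flat_map.
  exists (fst x mod 8). split. apply ns8_in, Z.mod_pos_bound; lia.
  apply in_map. apply ns8_in, Z.mod_pos_bound; lia.
Qed.

Lemma oddb_of x : oddN x -> oddb K (red3 x) = true.
Proof. intros H. unfold oddb. change (oddN (red3 x)). eapply oddN_cong2; [|exact H].
  eapply cong_divides; [|apply cong_sym, cong8_red3]. exists 4; reflexivity. Qed.

Lemma cond2_of x : cong 2 x (1,0) -> Z.odd (fst (red3 x)) && Z.even (snd (red3 x)) = true.
Proof.
  intros H. assert (H2 : cong 2 (red3 x) (1,0)).
  { eapply cong_trans; [|exact H]. eapply cong_divides; [|apply cong_sym, cong8_red3]. exists 4; reflexivity. }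
  destruct H2 as [w Hw]. rewrite Hw, zm_zc. unfold zq_add; cbn [fst snd].
  rewrite Z.odd_add_mul_2, Z.add_0_l, Z.even_mul. reflexivity.
Qed.

Definition P3 (x : zq) : Prop := exists z w, x = za (zm (zc 2) (zm pi z)) (zm (zc 8) w).

Lemma P3_P5 l x q : (2 <= l)%nat -> P3 x -> P5 (zm (zpow pi l) (zm x q)).
Proof.
  intros Hl [z [w ->]]. destruct (Nat.le_exists_sub 2 l Hl) as [j [-> _]].
  rewrite zpow_add. change (zpow pi 2) with (zm pi (zm pi (1,0))).
  exists (zm (zpow pi j) (zm eta (zm z q))), (zm (zpow pi j) (zm (zc 2) (zm eta (zm w q)))).
  replace (zm (zm (zpow pi j) (zm pi (zm pi (1,0)))) (zm (za (zm (zc 2) (zm pi z)) (zm (zc 8) w)) q))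
    with (zm (zm (zpow pi j) (zm pi pi)) (zm (za (zm (zc 2) (zm pi z)) (zm (zc 8) w)) q)) by zring.
  rewrite pi2. zring.
Qed.

Lemma c5_P5 x y : P5 x -> c5 x y -> P5 y.
Proof. intros H1 H2. apply P5_c5. apply P5_c5 in H1. eapply c5_trans; [apply c5_sym, H2| exact H1]. Qed.

Definition TA (m l : nat) (b2 b3 b4 b5 q2 q3 q4 q5 : zq) : zq :=
  za (za (zm b2 (zpow q2 (2*m))) (zm pi (za (zm b3 (zpow q3 (2*m))) (zm b4 (zpow q4 (2*m))))))
     (zm (zpow pi l) (zm b5 (zpow q5 (2*m)))).
Definition TB (m : nat) (b4 b5 q4 q5 : zq) : zq :=
  za (zm b4 (zpow q4 (2*m))) (zm (zpow pi 2) (zm b5 (zpow q5 (2*m)))).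

Lemma c5_red3 x : c5 x (red3 x).
Proof. apply c5_of_cong8, cong8_red3. Qed.

Lemma repcheck_at x : In x all64 ->
  (negb (Z.odd (fst x) && Z.even (snd x)) || existsb (fun r => in5b K (zsub x r)) (R2 K)) = true /\
  (negb (oddb K x) || existsb (fun r => in5b K (zsub x r)) (R16 K)) = true /\
  (negb (oddb K x) || existsb (fun r => in3b K (zsub x r)) (R4 K)) = true.
Proof.
  intros H. pose proof (repcheck_ok K) as R. unfold repcheck in R.
  rewrite forallb_forall in R. specialize (R x H).
  apply andb_prop in R as [R R3]. apply andb_prop in R as [R2 R16]. auto.
Qed.

Lemma rep2 x : cong 2 x (1,0) -> exists r, In r (R2 K) /\ c5 x r.
Proof.
  intros H. destruct (repcheck_at _ (in_all64 x)) as [A _].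
  rewrite (cond2_of x H) in A. simpl in A. apply existsb_exists in A as [r [Hr Hin]].
  exists r. split; auto. eapply c5_trans; [apply c5_red3|]. apply in5b_sound, Hin.
Qed.
Lemma rep16 x : oddN x -> exists r, In r (R16 K) /\ c5 x r.
Proof.
  intros H. destruct (repcheck_at _ (in_all64 x)) as [_ [A _]].
  rewrite (oddb_of x H) in A. simpl in A. apply existsb_exists in A as [r [Hr Hin]].
  exists r. split; auto. eapply c5_trans; [apply c5_red3|]. apply in5b_sound, Hin.
Qed.
Lemma rep4 x : oddN x -> exists r, In r (R4 K) /\ P3 (zsub x r).
Proof.
  intros H. destruct (repcheck_at _ (in_all64 x)) as [_ [_ A]].
  rewrite (oddb_of x H) in A. simpl in A. apply existsb_exists in A as [r [Hr Hin]].
  exists r. split; auto. apply in3b_sound in Hin as [z [w Hzw]].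
  destruct (cong8_red3 x) as [v Hv].
  exists z, (za w v).
  transitivity (za (zsub (red3 x) r) (zm (zc 8) v)).
  { rewrite Hv at 1. unfold zsub. zring. }
  rewrite Hzw. zring.
Qed.

Lemma c5_pil l b5 r5 Y C : (2 <= l)%nat -> P3 (zsub b5 r5) -> c5 Y C ->
  c5 (zm (zpow pi l) (zm b5 Y)) (zm (zpow pi l) (zm r5 C)).
Proof.
  intros Hl H3 HY. apply c5_trans with (y := zm (zpow pi l) (zm r5 Y)).
  - unfold c5. replace (zsub (zm (zpow pi l) (zm b5 Y)) (zm (zpow pi l) (zm r5 Y)))
      with (zm (zpow pi l) (zm (zsub b5 r5) Y)) by (unfold zsub; zring).
    apply P3_P5; auto.
  - apply c5_mul. apply c5_refl. apply c5_mul. apply c5_refl. exact HY.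
Qed.

Lemma P5_of_red_eq a b : red3 a = red3 b -> P5 (za b (zq_opp a)).
Proof. intros H. apply red3_cong in H as [w ->]. exists (0,0), (zq_opp w). zring. Qed.

Lemma P5_of_red_eq4 a b : red3 a = red3 (za (red3 b) (fourpi K)) -> P5 (za b (zq_opp a)).
Proof.
  intros H. apply red3_cong in H as [w Hw].
  destruct (cong8_red3 b) as [v Hv]. destruct (cong8_red3 (zm (zc 4) pi)) as [u Hu].
  unfold fourpi in Hw. exists (zq_opp (1,0)), (za (zq_opp w) (za u v)).
  set (rb := red3 b) in *. set (y4 := red3 (zm (zc 4) pi)) in *.
  rewrite Hw. rewrite Hv at 1.
  replace (zm (zc 4) (zm pi (zq_opp (1,0)))) with (zq_opp (zm (zc 4) pi)) by zring.
  rewrite Hu. zring.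
Qed.

Lemma cases m l b1 b2 b3 b4 b5 : Nat.odd m = true -> (2 <= l <= 4)%nat ->
  cong 8 b1 (1,0) -> cong 2 b2 (1,0) -> oddN b3 -> oddN b4 -> oddN b5 ->
  (exists s i2 i3 i4 i5, (1 <= s)%nat /\
     P5 (hF m b1 (TA m l b2 b3 b4 b5 (yv m i2) (yv m i3) (yv m i4) (yv m i5)) (yv m s))) \/
  (l = 3%nat /\ exists s i4 i5, (1 <= s)%nat /\ P5 (hF m b3 (TB m b4 b5 (yv m i4) (yv m i5)) (yv m s))).
Proof.
  intros Hm Hl H1 H2 H3 H4 H5.
  destruct (rep2 b2 H2) as [r2 [Ir2 C2]].
  destruct (rep16 b3 H3) as [r3 [Ir3 C3]].
  destruct (rep16 b4 H4) as [r4 [Ir4 C4]].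
  destruct (rep4 b5 H5) as [r5 [Ir5 C5]].
  pose proof (bigcheck_ok K) as B. unfold bigcheck in B.
  rewrite forallb_forall in B. specialize (B l ltac:(simpl; lia)).
  rewrite forallb_forall in B. specialize (B r5 Ir5).
  rewrite forallb_forall in B. specialize (B r3 Ir3).
  rewrite forallb_forall in B. specialize (B r4 Ir4).
  rewrite forallb_forall in B. specialize (B r2 Ir2).
  assert (Hb1 : c5 b1 (1,0)) by (apply c5_of_cong8; auto).
  destruct (checkA' (Qs K l r3 r4 r5) (Ps K r2)) eqn:HA.
  - left. clear B. unfold checkA' in HA. apply existsb_exists in HA as [q [Hq HA]].
    apply existsb_exists in HA as [p [Hp Hqp]]. apply zq_eqb_eq in Hqp. subst q.
    unfold Qs in Hq. apply in_flat_map in Hq as [i3 [_ Hq]]. apply in_flat_map in Hq as [i4 [_ Hq]].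
    apply in_map_iff in Hq as [i5 [Hq _]].
    unfold Ps in Hp. apply in_flat_map in Hp as [s [Hs Hp]]. apply in_flat_map in Hp as [i2 [_ Hp]].
    set (Pe := za (cls K s) (zm r2 (cls K i2))) in *.
    set (Qe := za (zm pi (za (zm r3 (cls K i3)) (zm r4 (cls K i4)))) (zm (zpow pi l) (zm r5 (cls K i5)))) in *.
    assert (HPQ : P5 (za Pe Qe)).
    { replace (za Pe Qe) with (za Pe (zq_opp (zq_opp Qe))) by zring.
      cbv zeta in Hp. destruct Hp as [Hp|[Hp|[]]].
      - apply P5_of_red_eq. rewrite Hq, <- Hp. reflexivity.
      - apply P5_of_red_eq4. rewrite Hq, <- Hp. reflexivity. }
    exists s, i2, i3, i4, i5. split. { simpl in Hs. destruct Hs as [<-|[<-|[]]]; lia. }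
    eapply c5_P5; [exact HPQ|]. apply c5_sym.
    unfold hF, TA, Pe, Qe.
    replace (za (za (cls K s) (zm r2 (cls K i2))) (za (zm pi (za (zm r3 (cls K i3)) (zm r4 (cls K i4)))) (zm (zpow pi l) (zm r5 (cls K i5)))))
      with (za (zm (1,0) (cls K s)) (za (za (zm r2 (cls K i2)) (zm pi (za (zm r3 (cls K i3)) (zm r4 (cls K i4))))) (zm (zpow pi l) (zm r5 (cls K i5))))) by zring.
    apply c5_add.
    + apply c5_mul; [exact Hb1 | apply yv_c5; auto].
    + apply c5_add; [apply c5_add|].
      * apply c5_mul; [exact C2| apply yv_c5; auto].
      * apply c5_mul; [apply c5_refl|]. apply c5_add; apply c5_mul; auto using yv_c5.
      * apply c5_pil; auto using yv_c5; lia.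
  - right. apply andb_prop in B as [Bl B]. apply Nat.eqb_eq in Bl. subst l. split; auto.
    apply existsb_exists in B as [s [Hs B]]. apply existsb_exists in B as [i4 [_ B]].
    apply existsb_exists in B as [i5 [_ B]]. apply in5b_sound in B.
    exists s, i4, i5. split. { simpl in Hs. destruct Hs as [<-|[<-|[]]]; lia. }
    eapply c5_P5; [exact B|]. apply c5_sym. unfold hF, TB.
    replace (za (za (zm r3 (cls K s)) (zm r4 (cls K i4))) (zm (zpow pi 2) (zm r5 (cls K i5))))
      with (za (zm r3 (cls K s)) (za (zm r4 (cls K i4)) (zm (zpow pi 2) (zm r5 (cls K i5))))) by zring.
    apply c5_add; [apply c5_mul; auto using yv_c5|]. apply c5_add; [apply c5_mul; auto using yv_c5|].
    apply c5_pil; auto using yv_c5.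
Qed.

Lemma isO_cst x : isO (Ocst x).
Proof. apply cong_isO; intros; apply cong_refl. Qed.
Lemma isO_mul s t : isO s -> isO t -> isO (Omul K s t).
Proof. intros Hs Ht. apply cong_isO; intros n. apply cong_mul; apply isO_cong; auto. Qed.
Lemma isO_fun2 (f : zq -> zq -> zq) s t :
  (forall g x x' y y', cong g x x' -> cong g y y' -> cong g (f x y) (f x' y')) ->
  isO s -> isO t -> isO (fun n => f (s n) (t n)).
Proof. intros Hf Hs Ht. apply cong_isO; intros n. apply Hf; apply isO_cong; auto. Qed.

Lemma cong_TA g m l b2 b3 b4 b5 q2 q3 q4 q5 b2' b3' b4' b5' q2' q3' q4' q5' :
  cong g b2 b2' -> cong g b3 b3' -> cong g b4 b4' -> cong g b5 b5' ->
  cong g q2 q2' -> cong g q3 q3' -> cong g q4 q4' -> cong g q5 q5' ->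
  cong g (TA m l b2 b3 b4 b5 q2 q3 q4 q5) (TA m l b2' b3' b4' b5' q2' q3' q4' q5').
Proof.
  intros. unfold TA.
  repeat first [apply cong_add | apply cong_mul | apply cong_pow | apply cong_refl | assumption].
Qed.
Lemma cong_TB g m b4 b5 q4 q5 b4' b5' q4' q5' :
  cong g b4 b4' -> cong g b5 b5' -> cong g q4 q4' -> cong g q5 q5' ->
  cong g (TB m b4 b5 q4 q5) (TB m b4' b5' q4' q5').
Proof.
  intros. unfold TB.
  repeat first [apply cong_add | apply cong_mul | apply cong_pow | apply cong_refl | assumption].
Qed.

Fixpoint Sz (s : nat) (f : nat -> zq) : zq :=
  match s with O => (0,0) | S s' => za (Sz s' f) (f s') end.
Lemma Osum_at s F n : Osum s F n = Sz s (fun i => F i n).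
Proof. induction s; simpl. reflexivity. unfold Oadd. rewrite IHs. reflexivity. Qed.
Lemma Sz_ext s f g : (forall i, (i < s)%nat -> f i = g i) -> Sz s f = Sz s g.
Proof. induction s; intros H; cbn [Sz]. reflexivity. rewrite IHs by (intros; apply H; lia). rewrite H by lia. reflexivity. Qed.
Lemma Sz_add s f g : Sz s (fun i => za (f i) (g i)) = za (Sz s f) (Sz s g).
Proof. induction s; cbn [Sz]. zring. rewrite IHs. zring. Qed.
Lemma Sz_zero n : Sz n (fun _ => (0,0)) = (0,0).
Proof. induction n; cbn [Sz]. reflexivity. rewrite IHn. zring. Qed.
Definition sel (j : nat) (G : zq) (i : nat) : zq := if Nat.eqb i j then G else (0,0).
Lemma Sz_sel s j G : (j < s)%nat -> Sz s (sel j G) = G.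
Proof.
  induction s; intros H. lia. cbn [Sz]. unfold sel at 2.
  destruct (Nat.eqb_spec s j).
  - subst. replace (Sz j (sel j G)) with (0,0). zring.
    symmetry. transitivity (Sz j (fun _ => (0,0))).
    + apply Sz_ext. intros i Hi. unfold sel. destruct (Nat.eqb_spec i j); [lia|reflexivity].
    + apply Sz_zero.
  - rewrite IHs by lia. zring.
Qed.

Lemma shift_exp r lev d M : (0 < d)%nat -> Nat.modulo r d = Nat.modulo lev d -> (r <= M)%nat ->
  exists t, (r + d * t = lev + d * M)%nat.
Proof.
  intros Hd Hm HM.
  pose proof (Nat.div_mod r d ltac:(lia)) as E1. pose proof (Nat.div_mod lev d ltac:(lia)) as E2.
  assert (Hq : (r / d <= M)%nat). { apply Nat.le_trans with r; auto. apply Nat.Div0.div_le_upper_bound; nia. }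
  exists (lev / d + (M - r / d))%nat.
  assert (d * (r / d) <= d * M)%nat by (apply Nat.mul_le_mono_l; auto).
  rewrite Nat.mul_add_distr_l, Nat.mul_sub_distr_l. lia.
Qed.

Lemma mod_neq a j d : (0 < j < d)%nat -> Nat.modulo a d <> Nat.modulo (a + j) d.
Proof.
  intros Hj He.
  pose proof (Nat.div_mod a d ltac:(lia)) as E1. pose proof (Nat.div_mod (a + j) d ltac:(lia)) as E2.
  rewrite <- He in E2. set (q1 := (a / d)%nat) in *. set (q2 := ((a + j) / d)%nat) in *.
  destruct (le_lt_dec q2 q1).
  - assert (d * q2 <= d * q1)%nat by (apply Nat.mul_le_mono_l; auto). lia.
  - assert (d * (q1 + 1) <= d * q2)%nat by (apply Nat.mul_le_mono_l; lia). lia.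
Qed.

Lemma lev_distinct a r u r' u' : isO u -> Ounit K u -> isO u' -> Ounit K u' ->
  Oeq a (Omul K (Opow K (Opi K) r) u) -> Oeq a (Omul K (Opow K (Opi K) r') u') -> r = r'.
Proof.
  intros Hu Uu Hu' Uu' E E'.
  set (n := (r + r' + 1)%nat).
  apply (val_unique n r r' (u n) (u' n)); try lia.
  - apply unit_odd; auto; lia.
  - apply unit_odd; auto; lia.
  - rewrite <- !Opi_pow_at. eapply cong_trans; [apply cong_sym, Oeq_cong, E| apply Oeq_cong, E'].
Qed.

Lemma isO_Opow_cst x e : isO (Opow K (Ocst x) e).
Proof. apply cong_isO; intros n. rewrite !Opow_at. apply cong_refl. Qed.

Lemma shift_id d r t E u Y : (r + d * t)%nat = E ->
  zm (zm (zpow pi r) u) (zpow (zm (zpow pi t) Y) d) = zm (zpow pi E) (zm u (zpow Y d)).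
Proof. intros HE. rewrite zpow_mulx, zpow_mul, <- HE, zpow_add, (Nat.mul_comm t d). zring. Qed.

Lemma assemble (m s : nat) (a : nat -> Oseq) (l R : nat) (i1 i2 j1 j2 p : nat)
  (r1 r2 r3 r4 r5 t1 t2 t3 t4 t5 : nat) (u1 u2 u3 u4 u5 v1 Y1 Y2 Y3 Y4 Y5 : Oseq) :
  (1 <= m)%nat ->
  (i1 < s)%nat -> (i2 < s)%nat -> (j1 < s)%nat -> (j2 < s)%nat -> (p < s)%nat ->
  i1 <> i2 -> i1 <> j1 -> i1 <> j2 -> i1 <> p -> i2 <> j1 -> i2 <> j2 -> i2 <> p ->
  j1 <> j2 -> j1 <> p -> j2 <> p ->
  Oeq (a i1) (Omul K (Opow K (Opi K) r1) u1) -> Oeq (a i2) (Omul K (Opow K (Opi K) r2) u2) ->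
  Oeq (a j1) (Omul K (Opow K (Opi K) r3) u3) -> Oeq (a j2) (Omul K (Opow K (Opi K) r4) u4) ->
  Oeq (a p) (Omul K (Opow K (Opi K) r5) u5) ->
  Oeq (Omul K u1 v1) Oone ->
  (r1 + 2 * m * t1 = R)%nat -> (r2 + 2 * m * t2 = R)%nat -> (r3 + 2 * m * t3 = R + 1)%nat ->
  (r4 + 2 * m * t4 = R + 1)%nat -> (r5 + 2 * m * t5 = R + l)%nat ->
  isO Y1 -> isO Y2 -> isO Y3 -> isO Y4 -> isO Y5 ->
  (forall n, cong (2 ^ Z.of_nat n) (hF m (zm (v1 n) (u1 n))
      (TA m l (zm (v1 n) (u2 n)) (zm (v1 n) (u3 n)) (zm (v1 n) (u4 n)) (zm (v1 n) (u5 n))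
          (Y2 n) (Y3 n) (Y4 n) (Y5 n)) (Y1 n)) (0,0)) ->
  (forall n, oddN (Y1 n)) \/ (forall n, oddN (Y3 n)) ->
  exists x : nat -> Oseq,
    (forall i, (i < s)%nat -> isO (x i)) /\
    (exists i, (i < s)%nat /\ ~ Oeq (x i) Ozero) /\
    Oeq (diag_form K (2 * m) s a x) Ozero.
Proof.
  intros Hm Hi1 Hi2 Hj1 Hj2 Hp D12 D13 D14 D15 D23 D24 D25 D34 D35 D45
    E1 E2 E3 E4 E5 Euv S1 S2 S3 S4 S5 O1 O2 O3 O4 O5 HPhi Hodd.
  set (X1 := Omul K (Opow K (Opi K) t1) Y1).
  set (X2 := Omul K (Opow K (Opi K) t2) Y2).
  set (X3 := Omul K (Opow K (Opi K) t3) Y3).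
  set (X4 := Omul K (Opow K (Opi K) t4) Y4).
  set (X5 := Omul K (Opow K (Opi K) t5) Y5).
  exists (fun i => if Nat.eqb i i1 then X1 else if Nat.eqb i i2 then X2 else if Nat.eqb i j1 then X3
              else if Nat.eqb i j2 then X4 else if Nat.eqb i p then X5 else Ozero).
  split; [|split].
  - intros i _. repeat (destruct (Nat.eqb i _)); try apply isO_cst; apply isO_mul; auto; apply isO_Opow_cst.
  - destruct Hodd as [Hodd|Hodd].
    + exists i1. split; auto. rewrite Nat.eqb_refl. apply nontriv; auto.
    + exists j1. split; auto.
      replace (Nat.eqb j1 i1) with false by (symmetry; apply Nat.eqb_neq; auto).
      replace (Nat.eqb j1 i2) with false by (symmetry; apply Nat.eqb_neq; auto).
      rewrite Nat.eqb_refl. apply nontriv; auto.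
  - apply cong_Oeq; intros n. change (Ozero n) with ((0,0) : zq). unfold diag_form. rewrite Osum_at.
    destruct (odd_pos' m Hm) as [e He].
    set (G1 := zm (a i1 n) (zpow (X1 n) (2 * m))).
    set (G2 := zm (a i2 n) (zpow (X2 n) (2 * m))).
    set (G3 := zm (a j1 n) (zpow (X3 n) (2 * m))).
    set (G4 := zm (a j2 n) (zpow (X4 n) (2 * m))).
    set (G5 := zm (a p n) (zpow (X5 n) (2 * m))).
    rewrite (Sz_ext s _ (fun i => za (za (za (za (sel i1 G1 i) (sel i2 G2 i)) (sel j1 G3 i)) (sel j2 G4 i)) (sel p G5 i))).
    2:{ intros i _. unfold Omul. rewrite Opow_at. unfold sel.
        destruct (Nat.eqb_spec i i1); [subst i|].
        { rewrite (proj2 (Nat.eqb_neq i1 i2) D12), (proj2 (Nat.eqb_neq i1 j1) D13),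
            (proj2 (Nat.eqb_neq i1 j2) D14), (proj2 (Nat.eqb_neq i1 p) D15). unfold G1. zring. }
        destruct (Nat.eqb_spec i i2); [subst i|].
        { rewrite (proj2 (Nat.eqb_neq i2 j1) D23), (proj2 (Nat.eqb_neq i2 j2) D24),
            (proj2 (Nat.eqb_neq i2 p) D25). unfold G2. zring. }
        destruct (Nat.eqb_spec i j1); [subst i|].
        { rewrite (proj2 (Nat.eqb_neq j1 j2) D34), (proj2 (Nat.eqb_neq j1 p) D35). unfold G3. zring. }
        destruct (Nat.eqb_spec i j2); [subst i|].
        { rewrite (proj2 (Nat.eqb_neq j2 p) D45). unfold G4. zring. }
        destruct (Nat.eqb_spec i p); [subst i|].
        { unfold G5. zring. }
        unfold Ozero, Ocst. rewrite He, zpow_zero. zring. }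
    rewrite !Sz_add, !Sz_sel by auto.
    set (B := za (za (za (zm (u1 n) (zpow (Y1 n) (2 * m))) (zm (u2 n) (zpow (Y2 n) (2 * m))))
                     (zm pi (za (zm (u3 n) (zpow (Y3 n) (2 * m))) (zm (u4 n) (zpow (Y4 n) (2 * m))))))
                 (zm (zpow pi l) (zm (u5 n) (zpow (Y5 n) (2 * m))))).
    apply cong_trans with (y := zm (zpow pi R) B).
    { assert (HG : forall (ai : Oseq) r u t Y E, Oeq ai (Omul K (Opow K (Opi K) r) u) -> (r + 2 * m * t = E)%nat ->
          cong (2 ^ Z.of_nat n) (zm (ai n) (zpow (Omul K (Opow K (Opi K) t) Y n) (2 * m)))
                                (zm (zpow pi E) (zm (u n) (zpow (Y n) (2 * m))))).
      { intros ai r u t Y E Ea Et. rewrite Opi_pow_at. rewrite <- (shift_id _ r t E); auto.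
        apply cong_mul; [|apply cong_refl]. rewrite <- Opi_pow_at. apply Oeq_cong; auto. }
      apply cong_trans with (y := za (za (za (za (zm (zpow pi R) (zm (u1 n) (zpow (Y1 n) (2 * m))))
                                                  (zm (zpow pi R) (zm (u2 n) (zpow (Y2 n) (2 * m)))))
                                              (zm (zpow pi (R + 1)) (zm (u3 n) (zpow (Y3 n) (2 * m)))))
                                          (zm (zpow pi (R + 1)) (zm (u4 n) (zpow (Y4 n) (2 * m)))))
                                      (zm (zpow pi (R + l)) (zm (u5 n) (zpow (Y5 n) (2 * m))))).
      - unfold G1, G2, G3, G4, G5. repeat apply cong_add; eapply HG; eauto.
      - rewrite !zpow_add. unfold B. cbn [Comp.zpow]. apply cong_refl_eq. zring. }
    set (Phi := hF m (zm (v1 n) (u1 n))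
      (TA m l (zm (v1 n) (u2 n)) (zm (v1 n) (u3 n)) (zm (v1 n) (u4 n)) (zm (v1 n) (u5 n))
          (Y2 n) (Y3 n) (Y4 n) (Y5 n)) (Y1 n)).
    assert (HB : Phi = zm (v1 n) B) by (unfold Phi, hF, TA, B; zring).
    apply cong_trans with (y := zm (zpow pi R) (zm (u1 n) Phi)).
    { apply cong_mul_l. rewrite HB.
      replace (zm (u1 n) (zm (v1 n) B)) with (zm (zm (u1 n) (v1 n)) B) by zring.
      replace B with (zm (1,0) B) at 1 by zring. apply cong_mul; [|apply cong_refl].
      apply cong_sym. apply (Oeq_cong _ _ n Euv). }
    replace (0,0) with (zm (zpow pi R) (zm (u1 n) (0,0))) by zring.
    apply cong_mul_l, cong_mul_l. apply HPhi.
Qed.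

Lemma picoef2 u c : pi_coef K u c -> cong 2 (u 3%nat) (za (1,0) (if c then pi else (0,0))).
Proof.
  intros [z [_ Hz]]. pose proof (Oeq_cong _ _ 3 Hz) as H. apply cong_sym in H. change (2 ^ Z.of_nat 3) with 8 in H.
  unfold Osub, Omul, Oone, Ocst in H. rewrite Opow_at in H. change (Opi K 3%nat) with pi in H.
  destruct H as [w Hw].
  exists (za (zm eta (z 3%nat)) (zm (zc 4) w)).
  replace (u 3%nat) with (za (za (za (u 3%nat) (zq_opp (1, 0))) (zq_opp ((if c then Opi K else Ozero) 3%nat)))
     (za (1,0) (if c then pi else (0,0)))) by (destruct c; unfold Opi, Ozero, Ocst; cbv beta iota; zring).
  rewrite Hw. change (zpow pi 2) with (zm pi (zm pi (1,0))).
  replace (zm (zm pi (zm pi (1, 0))) (z 3%nat)) with (zm (zm pi pi) (z 3%nat)) by zring.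
  rewrite pi2. zring.
Qed.

Lemma caseB_id m b1 b2 b3 b4 b5 X q4 q5 : (1 <= m)%nat ->
  hF m b1 (TA m 3 b2 b3 b4 b5 (0,0) X q4 q5) (0,0) = zm pi (hF m b3 (TB m b4 b5 q4 q5) X).
Proof.
  intros Hm. destruct (odd_pos' m Hm) as [e He]. unfold hF, TA, TB. rewrite He, zpow_zero.
  change (zpow pi 3) with (zm pi (zpow pi 2)). zring.
Qed.
End T.

Open Scope Z_scope.

Lemma lev_ne K d a lev lev' r u r' u' : (0 < d)%nat -> isO u -> Ounit K u -> isO u' -> Ounit K u' ->
  Oeq a (Omul K (Opow K (Opi K) r) u) -> Oeq a (Omul K (Opow K (Opi K) r') u') ->
  Nat.modulo r d = Nat.modulo lev d -> Nat.modulo r' d = Nat.modulo lev' d ->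
  Nat.modulo lev d <> Nat.modulo lev' d -> False.
Proof.
  intros Hd Hu Uu Hu' Uu' E E' M M' N.
  pose proof (lev_distinct K a r u r' u' Hu Uu Hu' Uu' E E') as ->. congruence.
Qed.

Theorem lemma16 (K : ramQ2) (m : nat) (s : nat) (a : nat -> Oseq) (k : nat) :
  Nat.odd m = true -> (3 <= m)%nat ->
  (forall i, (i < s)%nat -> isO (a i) /\ ~ Oeq (a i) Ozero) ->
  (exists i j c, (i < s)%nat /\ (j < s)%nat /\ i <> j /\
     level_coef K (2 * m) (a i) k c /\ level_coef K (2 * m) (a j) k c) ->
  (exists i j, (i < s)%nat /\ (j < s)%nat /\ i <> j /\
     at_level K (2 * m) (a i) (k + 1) /\ at_level K (2 * m) (a j) (k + 1)) ->
  (exists i l, (i < s)%nat /\ (2 <= l <= 4)%nat /\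
     at_level K (2 * m) (a i) (k + l)) ->
  exists x : nat -> Oseq,
    (forall i, (i < s)%nat -> isO (x i)) /\
    (exists i, (i < s)%nat /\ ~ Oeq (x i) Ozero) /\
    Oeq (diag_form K (2 * m) s a x) Ozero.
Proof.
  intros Hm Hm3 _ [i1 [i2 [c [Hi1 [Hi2 [D12 [L1 L2]]]]]]]
    [j1 [j2 [Hj1 [Hj2 [D34 [[c3 L3] [c4 L4]]]]]]] [p [l [Hp [Hl [c5' L5]]]]].
  destruct L1 as [r1 [u1 [Ou1 [Uu1 [E1 [M1 PC1]]]]]].
  destruct L2 as [r2 [u2 [Ou2 [Uu2 [E2 [M2 PC2]]]]]].
  destruct L3 as [r3 [u3 [Ou3 [Uu3 [E3 [M3 _]]]]]].
  destruct L4 as [r4 [u4 [Ou4 [Uu4 [E4 [M4 _]]]]]].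
  destruct L5 as [r5 [u5 [Ou5 [Uu5 [E5 [M5 _]]]]]].
  set (d := (2 * m)%nat) in *.
  assert (Hd : (6 <= d)%nat) by (unfold d; lia).
  assert (N01 : Nat.modulo k d <> Nat.modulo (k + 1) d) by (apply mod_neq; lia).
  assert (N0l : Nat.modulo k d <> Nat.modulo (k + l) d) by (apply mod_neq; lia).
  assert (N1l : Nat.modulo (k + 1) d <> Nat.modulo (k + l) d).
  { replace (k + l)%nat with (k + 1 + (l - 1))%nat by lia. apply mod_neq; lia. }
  assert (D13 : i1 <> j1) by (intros ->; apply (lev_ne K d (a j1) k (k+1) r1 u1 r3 u3); auto; lia).
  assert (D14 : i1 <> j2) by (intros ->; apply (lev_ne K d (a j2) k (k+1) r1 u1 r4 u4); auto; lia).
  assert (D15 : i1 <> p) by (intros ->; apply (lev_ne K d (a p) k (k+l) r1 u1 r5 u5); auto; lia).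
  assert (D23 : i2 <> j1) by (intros ->; apply (lev_ne K d (a j1) k (k+1) r2 u2 r3 u3); auto; lia).
  assert (D24 : i2 <> j2) by (intros ->; apply (lev_ne K d (a j2) k (k+1) r2 u2 r4 u4); auto; lia).
  assert (D25 : i2 <> p) by (intros ->; apply (lev_ne K d (a p) k (k+l) r2 u2 r5 u5); auto; lia).
  assert (D35 : j1 <> p) by (intros ->; apply (lev_ne K d (a p) (k+1) (k+l) r3 u3 r5 u5); auto; lia).
  assert (D45 : j2 <> p) by (intros ->; apply (lev_ne K d (a p) (k+1) (k+l) r4 u4 r5 u5); auto; lia).
  set (M := (r1 + r2 + r3 + r4 + r5)%nat).
  set (R := (k + d * M)%nat).
  destruct (shift_exp r1 k d M ltac:(clear - Hd; lia) M1 ltac:(unfold M; clear; lia)) as [t1 S1].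
  destruct (shift_exp r2 k d M ltac:(clear - Hd; lia) M2 ltac:(unfold M; clear; lia)) as [t2 S2].
  destruct (shift_exp r3 (k+1) d M ltac:(clear - Hd; lia) M3 ltac:(unfold M; clear; lia)) as [t3 S3].
  destruct (shift_exp r4 (k+1) d M ltac:(clear - Hd; lia) M4 ltac:(unfold M; clear; lia)) as [t4 S4].
  destruct (shift_exp r5 (k+l) d M ltac:(clear - Hd; lia) M5 ltac:(unfold M; clear; lia)) as [t5 S5].
  assert (S1' : (r1 + 2 * m * t1 = R)%nat) by exact S1.
  assert (S2' : (r2 + 2 * m * t2 = R)%nat) by exact S2.
  assert (S3' : (r3 + 2 * m * t3 = R + 1)%nat) by (change (r3 + d * t3 = R + 1)%nat; rewrite S3; unfold R; clear; lia).
  assert (S4' : (r4 + 2 * m * t4 = R + 1)%nat) by (change (r4 + d * t4 = R + 1)%nat; rewrite S4; unfold R; clear; lia).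
  assert (S5' : (r5 + 2 * m * t5 = R + l)%nat) by (change (r5 + d * t5 = R + l)%nat; rewrite S5; unfold R; clear; lia).
  destruct Uu1 as [v1 [Ov1 Euv]].
  assert (Uv1 : Ounit K v1).
  { exists u1. split; auto. intros n. unfold Omul.
    replace (zq_mul K (v1 n) (u1 n)) with (zq_mul K (u1 n) (v1 n)). apply Euv.
    unfold zq_mul; f_equal; ring. }
  assert (Uu1 : Ounit K u1) by (exists v1; auto).
  set (b1 := Omul K v1 u1). set (b2 := Omul K v1 u2). set (b3 := Omul K v1 u3).
  set (b4 := Omul K v1 u4). set (b5 := Omul K v1 u5).
  assert (Ob : forall u, isO u -> Ounit K u -> isO (Omul K v1 u) /\ forall n, (1 <= n)%nat -> oddN K (Omul K v1 u n)).
  { intros u Hu Uu. split. apply isO_mul; auto. intros n Hn. apply oddN_mul; apply unit_odd; auto. }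
  assert (B1 : cong K 8 (b1 3%nat) (1,0)).
  { pose proof (Oeq_cong K _ _ 3 Euv) as H. change (2 ^ Z.of_nat 3) with 8 in H.
    unfold b1, Omul in *. replace (zq_mul K (v1 3%nat) (u1 3%nat)) with (zq_mul K (u1 3%nat) (v1 3%nat)).
    exact H. unfold zq_mul; f_equal; ring. }
  assert (B2 : cong K 2 (b2 3%nat) (1,0)).
  { apply cong_trans with (y := b1 3%nat).
    - unfold b1, b2, Omul. apply cong_mul_l. eapply cong_trans; [apply picoef2; exact PC2|].
      apply cong_sym, picoef2; exact PC1.
    - eapply cong_divides; [|exact B1]. exists 4; reflexivity. }
  assert (Hm1 : (1 <= m)%nat) by lia.
  destruct (cases K m l (b1 3%nat) (b2 3%nat) (b3 3%nat) (b4 3%nat) (b5 3%nat) Hm Hl B1 B2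
     (proj2 (Ob u3 Ou3 Uu3) 3%nat ltac:(lia)) (proj2 (Ob u4 Ou4 Uu4) 3%nat ltac:(lia))
     (proj2 (Ob u5 Ou5 Uu5) 3%nat ltac:(lia)))
    as [[s0 [i2' [i3' [i4' [i5' [Hs P]]]]]] | [Hl3 [s0 [i4' [i5' [Hs P]]]]]].
  -
    set (T := fun n => TA K m l (b2 n) (b3 n) (b4 n) (b5 n) (yv K m i2') (yv K m i3') (yv K m i4') (yv K m i5')).
    destruct (hensel_start K m (b1 3%nat) (T 3%nat) (yv K m s0) Hm (proj2 (Ob u1 Ou1 Uu1) 3%nat ltac:(lia))
      (yv_odd K m s0 Hs) P) as [x1 [Ox1 [_ Cx1]]].
    assert (OT : isO T).
    { apply (cong_isO K); intros n. unfold T. apply (cong_TA K); try apply (cong_refl K); apply (isO_cong K);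
        apply (isO_mul K); auto. }
    destruct (hensel K m b1 T x1 Hm (proj1 (Ob u1 Ou1 Uu1)) (proj2 (Ob u1 Ou1 Uu1)) OT Ox1 Cx1)
      as [X [OX [HX EX]]].
    apply (assemble K m s a l R i1 i2 j1 j2 p r1 r2 r3 r4 r5 t1 t2 t3 t4 t5 u1 u2 u3 u4 u5 v1
      X (Ocst (yv K m i2')) (Ocst (yv K m i3')) (Ocst (yv K m i4')) (Ocst (yv K m i5')));
      auto; try apply (isO_cst K).
  -
    subst l.
    set (T := fun n => TB K m (b4 n) (b5 n) (yv K m i4') (yv K m i5')).
    destruct (hensel_start K m (b3 3%nat) (T 3%nat) (yv K m s0) Hm (proj2 (Ob u3 Ou3 Uu3) 3%nat ltac:(lia))
      (yv_odd K m s0 Hs) P) as [x1 [Ox1 [_ Cx1]]].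
    assert (OT : isO T).
    { apply (cong_isO K); intros n. unfold T. apply (cong_TB K); try apply (cong_refl K); apply (isO_cong K);
        apply (isO_mul K); auto. }
    destruct (hensel K m b3 T x1 Hm (proj1 (Ob u3 Ou3 Uu3)) (proj2 (Ob u3 Ou3 Uu3)) OT Ox1 Cx1)
      as [X [OX [HX EX]]].
    apply (assemble K m s a 3 R i1 i2 j1 j2 p r1 r2 r3 r4 r5 t1 t2 t3 t4 t5 u1 u2 u3 u4 u5 v1
      Ozero Ozero X (Ocst (yv K m i4')) (Ocst (yv K m i5'))); auto; try apply (isO_cst K).
    intros n. unfold Ozero, Ocst. rewrite caseB_id by auto.
    replace ((0,0) : zq) with (zq_mul K (piZ K) (0,0)) by (unfold zq_mul; cbn [fst snd]; f_equal; ring).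
    apply cong_mul_l. apply EX.
Qed.
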